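(* Let $n\geq 2$. Let $S$ be the semigroup with zero $0$ defined by the presentation with generators $x,y,z$ and defining relations $$xyz=x,\quad yzy=y,\quad zyz=z,$$ together with $w=0$ for each $w\in\{x^n,\ y^2,\ z^2,\ xz,\ yx,\ zx^{n-1}\}$, and let $A=S^1\{x,y\}$. Then $S$ is finite, $\mathrm{H}_{\mathcal{R}}(S)=n$ and $\mathrm{H}_{\mathcal{R}}(A)=2n-1$.
   Context: A presentation of a semigroup with zero $\langle X\mid R\rangle$ defines the quotient of the free semigroup with zero on $X$ by the congruence generated by $R$. $S^1$ denotes $S$ with an identity adjoined; $A=S^1\{x,y\}$ is the left ideal generated by $x,y$. Green's preorder: $a\leq_{\mathcal{R}} b$ iff $aS^1\subseteq bS^1$; $\mathcal{R}$ is the associated equivalence; the $\mathcal{R}$-height $\mathrm{H}_{\mathcal{R}}$ of a semigroup is the supremum of cardinalities of chains in its poset of $\mathcal{R}$-classes; for $A$ it is computed in the semigroup $A$ itself. *)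

(* Defs.v *)
From mathcomp Require Import all_boot.
Set Implicit Arguments. Unset Strict Implicit. Unset Printing Implicit Defensive.

Inductive gen := gx | gy | gz.

(** Free semigroup with zero on {x,y,z}: either the zero, or a nonempty
    word [Word a s] = a followed by the letters of s. *)
Inductive FS := Zero | Word of gen & seq gen.

Definition fmul (u v : FS) : FS :=
  match u, v with
  | Word a s, Word b t => Word a (s ++ b :: t)
  | _, _ => Zero
  end.

Inductive cong (R : FS -> FS -> Prop) : FS -> FS -> Prop :=
  | cong_base u v : R u v -> cong R u v
  | cong_refl u : cong R u u
  | cong_sym u v : cong R u v -> cong R v u
  | cong_trans u v w : cong R u v -> cong R v w -> cong R u w
  | cong_mull w u v : cong R u v -> cong R (fmul w u) (fmul w v)
  | cong_mulr w u v : cong R u v -> cong R (fmul u w) (fmul v w).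

Definition X : FS := Word gx [::].
Definition Y : FS := Word gy [::].
Definition Z : FS := Word gz [::].

Inductive rels (n : nat) : FS -> FS -> Prop :=
  | r_xyz : rels n (Word gx [:: gy; gz]) X
  | r_yzy : rels n (Word gy [:: gz; gy]) Y
  | r_zyz : rels n (Word gz [:: gy; gz]) Z
  | r_xn  : rels n (Word gx (nseq n.-1 gx)) Zero           (* x^n = 0 *)
  | r_y2  : rels n (Word gy [:: gy]) Zero
  | r_z2  : rels n (Word gz [:: gz]) Zero
  | r_xz  : rels n (Word gx [:: gz]) Zero
  | r_yx  : rels n (Word gy [:: gx]) Zero
  | r_zxn1 : rels n (Word gz (nseq n.-1 gx)) Zero.         (* z x^(n-1) = 0 *)

(** Equality in S (elements of S are represented by elements of FS). *)
Definition eqS (n : nat) : FS -> FS -> Prop := cong (rels n).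

Definition S_finite (n : nat) : Prop :=
  exists (k : nat) (f : nat -> FS), forall u, exists i, i < k /\ eqS n u (f i).

(** Green's R-preorder in S:  u S^1 ⊆ v S^1, i.e. u = v or u = v w. *)
Definition leR_S (n : nat) (u v : FS) : Prop :=
  eqS n u v \/ exists w, eqS n u (fmul v w).

Definition inA (n : nat) (u : FS) : Prop :=
  eqS n u X \/ eqS n u Y \/ exists t, eqS n u (fmul t X) \/ eqS n u (fmul t Y).

(** Green's R-preorder computed in the semigroup A itself: u A^1 ⊆ v A^1. *)
Definition leR_A (n : nat) (u v : FS) : Prop :=
  eqS n u v \/ exists w, inA n w /\ eqS n u (fmul v w).

Definition ltR (le : FS -> FS -> Prop) (u v : FS) : Prop := le u v /\ ~ le v u.

Definition R_chain (le : FS -> FS -> Prop) (P : FS -> Prop) (k : nat)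
  (f : nat -> FS) : Prop :=
  (forall i, i < k -> P (f i)) /\ (forall i, i.+1 < k -> ltR le (f i) (f i.+1)).

Definition R_height_eq (le : FS -> FS -> Prop) (P : FS -> Prop) (h : nat) : Prop :=
  (exists f, R_chain le P h f) /\ (forall k f, R_chain le P k f -> k <= h).

(* Main.v *)
Require Import Defs.
From mathcomp Require Import all_boot.
From mathcomp Require Import zify.
Set Implicit Arguments. Unset Strict Implicit.

Inductive pre := PX | PZ | PYZ.
Inductive st := One | Zr | E of pre & nat & bool.

Definition step (n : nat) (s : st) (a : gen) : st :=
  match s with
  | One => match a with gx => E PX 0 false | gy => E PYZ 0 true | gz => E PZ 0 false end
  | Zr => Zr
  | E p k b => match a with
     | gx => if b then Zr else if k.+1 < n - 1 then E p k.+1 false else Zr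
     | gy => if b then Zr else E p k true
     | gz => if b then E p k false else Zr
     end
  end.

Definition act n (s : st) (u : FS) : st :=
  match u with Zero => Zr | Word a l => foldl (step n) s (a :: l) end.
Definition V n u := act n One u.

Definition mkW (l : seq gen) : FS := if l is a :: l' then Word a l' else Zero.
Definition preS p := match p with PX => [:: gx] | PZ => [:: gz] | PYZ => [:: gy; gz] end.
Definition bl (b : bool) := if b then [:: gy] else [::].
Definition nf (s : st) : FS :=
  match s with E p k b => mkW (preS p ++ nseq k gx ++ bl b) | _ => Zero end.

Lemma foldl_Zr n l : foldl (step n) Zr l = Zr.
Proof. by elim: l. Qed.

Lemma act_Zr n u : act n Zr u = Zr.
Proof. case: u => //= a l; exact: foldl_Zr. Qed.

Lemma act_fmul n s u v : act n s (fmul u v) = act n (act n s u) v.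
Proof.
case: u => [|a l] /=; first by rewrite act_Zr.
case: v => [|b m] //=. by rewrite foldl_cat.
Qed.

Lemma iterx n p k m : foldl (step n) (E p k false) (nseq m.+1 gx) =
  if k + m.+1 < n - 1 then E p (k + m.+1) false else Zr.
Proof.
elim: m k => [|m IH] k.
  by rewrite /= addn1.
rewrite (_ : nseq m.+2 gx = gx :: nseq m.+1 gx) // [foldl _ _ (_ :: _)]/=.
case: ifP => h.
  rewrite -[LHS]/(foldl (step n) (E p k.+1 false) (nseq m.+1 gx)) IH. by rewrite addSnnS.
rewrite foldl_Zr. case: ifP => // h2. move/negbT: h. lia.
Qed.

Lemma iterx0 n p k m : k < n - 1 -> foldl (step n) (E p k false) (nseq m gx) =
  if k + m < n - 1 then E p (k + m) false else Zr.
Proof. case: m => [|m] h; first by rewrite addn0 h. exact: iterx. Qed.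

Lemma rels_sound n (hn : 2 <= n) u v : rels n u v -> forall s, act n s u = act n s v.
Proof.
have [m hm] : exists m, n.-1 = m.+1 by exists n.-2; lia.
case=> s; case: s => [||p k []] //=; try by case: ifP.
- by rewrite hm iterx; case: ifP => //; lia.
all: rewrite ?foldl_Zr //; rewrite hm; try (case: ifP => h0; rewrite ?foldl_Zr //); rewrite iterx; case: ifP => //; lia.
Qed.

Lemma sound n (hn : 2 <= n) u v : eqS n u v -> forall s, act n s u = act n s v.
Proof.
elim=> {u v} [u v /(rels_sound hn) //|u //|u v _ IH s|u v w _ IH1 _ IH2 s|w u v _ IH s|w u v _ IH s].
- by rewrite IH.
- by rewrite IH1 IH2.
- by rewrite !act_fmul IH.
- by rewrite !act_fmul IH.
Qed.

Definition lm (s : seq gen) (u : FS) := if s is [::] then u else fmul (mkW s) u.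
Definition rm (t : seq gen) (u : FS) := if t is [::] then u else fmul u (mkW t).

Lemma ctx n s t u v : eqS n u v -> eqS n (lm s (rm t u)) (lm s (rm t v)).
Proof.
move=> h; case: s => [|a s]; case: t => [|b t].
- exact: h.
- exact: cong_mulr.
- exact: cong_mull.
- apply: cong_mull; exact: cong_mulr.
Qed.

Lemma lm_rm_W s t l : l <> [::] -> lm s (rm t (mkW l)) = mkW (s ++ l ++ t).
Proof. by case: l => // c l _; case: s => [|a s]; case: t => [|b t] /=; rewrite ?cats0. Qed.

Lemma lm_rm_Zero s t : lm s (rm t Zero) = Zero.
Proof. by case: s => [|a s]; case: t. Qed.

Lemma redW n s t l r L L' : L = s ++ l ++ t -> L' = s ++ r ++ t ->
  rels n (mkW l) (mkW r) -> l <> [::] -> r <> [::] -> eqS n (mkW L) (mkW L').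
Proof.
move=> -> -> h hl hr; rewrite -!lm_rm_W //; apply: ctx; exact: cong_base.
Qed.

Lemma red0 n s t l L : L = s ++ l ++ t ->
  rels n (mkW l) Zero -> l <> [::] -> eqS n (mkW L) Zero.
Proof.
move=> -> h hl; rewrite -(lm_rm_Zero s t) -lm_rm_W //; apply: ctx; exact: cong_base.
Qed.

Lemma nseqSr (k : nat) (x : gen) : nseq k.+1 x = nseq k x ++ [:: x].
Proof. by elim: k => //= k ->. Qed.

Lemma fmul_mkW l m : l <> [::] -> m <> [::] -> fmul (mkW l) (mkW m) = mkW (l ++ m).
Proof. by case: l => // a l; case: m. Qed.

Lemma preS_n0 p : preS p <> [::]. Proof. by case: p. Qed.

Lemma step_nf n (hn : 2 <= n) s a : s <> One ->
  eqS n (fmul (nf s) (Word a [::])) (nf (step n s a)).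
Proof.
case: s => [//||p k b] _; first exact: cong_refl.
rewrite /nf.
have -> : fmul (mkW (preS p ++ nseq k gx ++ bl b)) (Word a [::]) = mkW ((preS p ++ nseq k gx ++ bl b) ++ [:: a]) by case: p.
case: a; case: b => /=.
- apply: (@red0 _ (preS p ++ nseq k gx) [::] [:: gy; gx]) => //; first by rewrite -!catA.
  exact: r_yx.
- case: ifP => h.
    by rewrite nseqSr !cats0 -!catA; apply: cong_refl.
  have e : k.+2 = (k.+2 - n) + (n.-1).+1 by lia.
  case: p.
  + apply: (@red0 _ (nseq (k.+2 - n) gx) [::] (gx :: nseq n.-1 gx)) => //; last exact: r_xn.
    rewrite /= !cats0 -nseqSr.
    change (nseq k.+2 gx = nseq (k.+2-n) gx ++ nseq (n.-1).+1 gx). by rewrite -nseqD -e.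
  + apply: (@red0 _ [::] (nseq (k.+2 - n) gx) (gz :: nseq n.-1 gx)) => //; last exact: r_zxn1.
    rewrite /= cats0 -nseqSr -nseqD; congr (_ :: nseq _ _); lia.
  + apply: (@red0 _ [:: gy] (nseq (k.+2 - n) gx) (gz :: nseq n.-1 gx)) => //; last exact: r_zxn1.
    rewrite /= cats0 -nseqSr -nseqD; congr (_ :: _ :: nseq _ _); lia.
- apply: (@red0 _ (preS p ++ nseq k gx) [::] [:: gy; gy]) => //; first by rewrite -!catA.
  exact: r_y2.
- by rewrite cats0 -!catA; apply: cong_refl.
- case: k => [|k].
  + case: p.
    * apply: (@redW _ [::] [::] [:: gx; gy; gz] [:: gx]) => //; exact: r_xyz.
    * apply: (@redW _ [::] [::] [:: gz; gy; gz] [:: gz]) => //; exact: r_zyz.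
    * apply: (@redW _ [::] [:: gz] [:: gy; gz; gy] [:: gy]) => //; exact: r_yzy.
  + apply: (@redW _ (preS p ++ nseq k gx) [::] [:: gx; gy; gz] [:: gx]) => //.
    * by rewrite nseqSr -!catA.
    * by rewrite nseqSr cats0 -!catA.
    * exact: r_xyz.
- case: k => [|k].
  + case: p.
    * apply: (@red0 _ [::] [::] [:: gx; gz]) => //; exact: r_xz.
    * apply: (@red0 _ [::] [::] [:: gz; gz]) => //; exact: r_z2.
    * apply: (@red0 _ [:: gy] [::] [:: gz; gz]) => //; exact: r_z2.
  + apply: (@red0 _ (preS p ++ nseq k gx) [::] [:: gx; gz]) => //.
    * by rewrite nseqSr -!catA.
    * exact: r_xz.
Qed.

Lemma step_nOne n s a : step n s a <> One.
Proof. by case: s => [||p k []]; case: a => //=; case: ifP. Qed.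

Lemma foldl_nOne n s l : s <> One -> foldl (step n) s l <> One.
Proof. elim: l s => //= a l IH s _; apply: IH; exact: step_nOne. Qed.

Lemma V_word n a l : V n (Word a l) = foldl (step n) (step n One a) l.
Proof. by []. Qed.

Lemma V_nOne n u : V n u <> One.
Proof. case: u => // a l; rewrite V_word; apply: foldl_nOne; exact: step_nOne. Qed.

Lemma nf_V n (hn : 2 <= n) u : eqS n u (nf (V n u)).
Proof.
case: u => [|a l]; first exact: cong_refl.
elim/last_ind: l => [|l c IH].
  case: a; try apply: cong_refl. apply: cong_sym; apply: cong_base; exact: r_yzy.
have -> : Word a (rcons l c) = fmul (Word a l) (Word c [::]) by rewrite /= cats1.
have -> : V n (fmul (Word a l) (Word c [::])) = step n (V n (Word a l)) c.
  by rewrite /V act_fmul.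
apply: cong_trans (cong_mulr (Word c [::]) IH) _.
apply: step_nf => //; exact: V_nOne.
Qed.

Lemma eqS_V n (hn : 2 <= n) u v : eqS n u v <-> V n u = V n v.
Proof.
split; first by move=> h; apply: sound.
move=> e; apply: cong_trans (nf_V hn u) _; rewrite e; apply: cong_sym; exact: nf_V.
Qed.

Lemma act_nf n (hn : 2 <= n) s w : act n s w = act n s (nf (V n w)).
Proof. apply: sound => //; exact: nf_V. Qed.

Lemma V_fmul n u w : V n (fmul u w) = act n (V n u) w.
Proof. exact: act_fmul. Qed.

Definition valid n s := match s with E _ k _ => k < n - 1 | _ => true end.

Lemma valid_step n (hn : 2 <= n) s a : valid n s -> valid n (step n s a).
Proof. case: s => [||p k []]; case: a => //= h; try lia; case: ifP => //. Qed.

Lemma foldl_valid n (hn : 2 <= n) s l : valid n s -> valid n (foldl (step n) s l).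
Proof. elim: l s => //= a l IH s h; apply: IH; exact: valid_step. Qed.

Lemma V_valid n (hn : 2 <= n) u : valid n (V n u).
Proof. case: u => // a l; rewrite V_word; apply: foldl_valid => //; exact: valid_step. Qed.

Lemma actl_bl n s b : foldl (step n) s (bl b) =
  if b then step n s gy else s.
Proof. by case: b. Qed.

Lemma act_mkW n s l : l <> [::] -> act n s (mkW l) = foldl (step n) s l.
Proof. by case: l. Qed.

Lemma V_nf n (hn : 2 <= n) s : valid n s -> s <> One -> V n (nf s) = s.
Proof.
case: s => [//|//|p k b] /= h _.
rewrite /V act_mkW; last by case: p.
rewrite !foldl_cat actl_bl.
case: p => /=; rewrite ?iterx0 ?add0n ?h //; try lia; by case: b.
Qed.

Definition master n p k b p' k' b' :=
  match p' with
  | PX => if b then Zr else if k + k'.+1 < n - 1 then E p (k + k'.+1) b' else Zr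
  | PZ => if b then (if k + k' < n - 1 then E p (k + k') b' else Zr) else Zr
  | PYZ => if b then Zr else (if k + k' < n - 1 then E p (k + k') b' else Zr)
  end.

Lemma act_master n (hn : 2 <= n) p k b p' k' b' : k < n - 1 ->
  act n (E p k b) (nf (E p' k' b')) = master n p k b p' k' b'.
Proof.
move=> hk; rewrite /nf act_mkW; last by case: p'.
rewrite !foldl_cat actl_bl.
case: p'; case: b => /=; rewrite ?foldl_Zr; try by case: b'.
- have E1 : foldl (step n) (if k.+1 < n - 1 then E p k.+1 false else Zr) (nseq k' gx)
     = if k + k'.+1 < n - 1 then E p (k + k'.+1) false else Zr.
    case: ifP => h; first by rewrite iterx0 // addSnnS.
    rewrite foldl_Zr. case: ifP => h2 //. by exfalso; move/negbT: h; lia.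
  by rewrite E1; case: b'; case: ifP.
- rewrite iterx0 //; by case: b'; case: ifP.
- rewrite iterx0 //; by case: b'; case: ifP.
Qed.

Definition rkS n s := match s with E _ k _ => n - 1 - k | _ => 0 end.
Definition rkA n s := match s with E _ k b => (n - 1 - k).*2 - b | _ => 0 end.

Lemma leS_of n (hn : 2 <= n) u v w : V n u = act n (V n v) w -> leR_S n u v.
Proof. move=> e; right; exists w; apply/(eqS_V hn); by rewrite V_fmul. Qed.

Lemma leS_eq n (hn : 2 <= n) u v : V n u = V n v -> leR_S n u v.
Proof. by move=> e; left; apply/(eqS_V hn). Qed.

Lemma leS n (hn : 2 <= n) u v : leR_S n u v ->
  rkS n (V n u) < rkS n (V n v) \/ (rkS n (V n u) = rkS n (V n v) /\ leR_S n v u).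
Proof.
case=> [h | [w h]].
  have e := (proj1 (eqS_V hn u v) h).
  right; split; first by rewrite e. by apply: (leS_eq hn); rewrite e.
move/(eqS_V hn): h; rewrite V_fmul (act_nf hn) => e.
have vv := V_valid hn v; have nv := @V_nOne n v; have vw := V_valid hn w; have nw := @V_nOne n w.
move: vv nv e; case ev: (V n v) => [||p k b].
- by [].
- move=> _ _. by rewrite act_Zr => e; right; split; [rewrite e | apply: (leS_eq hn); rewrite e ev].
move=> vk _; rewrite /= in vk.
move: vw nw; case: (V n w) => [||p' k' b'].
- by [].
- by move=> _ _ /= e; left; rewrite e /=; simpl in vk; lia.
move=> _ _.
rewrite act_master // /master => e.
case: p' e; move: ev; case: b; case: b' => //= ev; try (case: ifP => // h); move=> e; rewrite e /=;
  try (left; lia); case: k' h e => [|k'] h e; try (left; lia); rewrite ?addn0 in e *;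
  right; (split; first done);
  first [by apply: (leS_eq hn); rewrite ev e | by apply: (leS_of hn (w := Y)); rewrite ev e
        | by apply: (leS_of hn (w := Z)); rewrite ev e].
Qed.

Definition inAs s := match s with
  | One => False | Zr => True | E PX _ _ => True | E _ k b => (0 < k) || b end.

Lemma inA_s n (hn : 2 <= n) w : inA n w -> inAs (V n w).
Proof.
case=> [h|[h|[t [h|h]]]]; rewrite (proj1 (eqS_V hn _ _) h) ?V_fmul //=;
  case: (V n t) => [||p k b] //=; case: p; case: b => //=.
  all: try by case: ifP.
  all: by rewrite orbT.
Qed.

Lemma leA n (hn : 2 <= n) u v : leR_A n u v ->
  V n u = V n v \/ rkA n (V n u) < rkA n (V n v).
Proof.
case=> [h | [w [iw h]]]; first by left; apply/(eqS_V hn).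
move/(eqS_V hn): h; rewrite V_fmul (act_nf hn) => e.
have vv := V_valid hn v; have nv := @V_nOne n v; have iws := inA_s hn iw.
move: vv nv e; case ev: (V n v) => [||p k b].
- by [].
- by move=> _ _; rewrite act_Zr => e; left.
move=> vk _; rewrite /= in vk.
move: iws; case: (V n w) => [||p' k' b'].
- by [].
- by move=> _ /= e; right; rewrite e /=; case: b ev => _; lia.
rewrite act_master // /master.
case: p'; move: ev; case: b; case: b' => //= ev iws; try (case: ifP => // h); move=> e; rewrite e /=;
  try (right; lia); case: k' iws h e => [|k'] iws h e; try (right; lia); rewrite ?addn0 in e *;
  by left.
Qed.

Lemma chain_bound (g : nat -> nat) M k : (forall i, i < k -> g i <= M) ->
  (forall i, i.+1 < k -> g i < g i.+1) -> k <= M.+1.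
Proof.
move=> hM hs.
have hi : forall i, i < k -> i <= g i.
  elim=> [//|i IH] hik. have := hs i hik. have := IH (ltnW hik). lia.
case: k hM hs hi => // k hM hs hi. have := hi k (ltnSn k). have := hM k (ltnSn k). lia.
Qed.

Definition sS n i := if i == 0 then Zr else E PX (n - 1 - i) false.
Definition sA n i := if i == 0 then Zr else E PX (n - 1 - uphalf i) (odd i).

Lemma VsS n (hn : 2 <= n) i : i < n -> V n (nf (sS n i)) = sS n i.
Proof. case: i => [//|i] hi; apply: V_nf => //=; lia. Qed.

Lemma rkS_sS n i : i < n -> rkS n (sS n i) = i.
Proof. case: i => [//|i] /= hi; lia. Qed.

Lemma parity i : exists h, i = h.*2 \/ i = h.*2.+1.
Proof.
exists i./2; have := odd_double_half i; case: (odd i) => /= e; [right|left]; rewrite -!addnn in e *; lia.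
Qed.

Lemma sA_even n h : sA n h.*2 = if h == 0 then Zr else E PX (n - 1 - h) false.
Proof. rewrite /sA uphalf_double odd_double; by case: h. Qed.

Lemma sA_odd n h : sA n h.*2.+1 = E PX (n - 1 - h.+1) true.
Proof. by rewrite /sA /= doubleK odd_double. Qed.

Lemma VsA n (hn : 2 <= n) i : i < (n - 1).*2.+1 -> V n (nf (sA n i)) = sA n i.
Proof.
case: (parity i) => h [] -> hi.
  rewrite sA_even; case: h hi => [//|h] hi; apply: V_nf => //=; lia.
rewrite sA_odd; apply: V_nf => //=; lia.
Qed.

Lemma rkA_sA n i : i < (n - 1).*2.+1 -> rkA n (sA n i) = i.
Proof.
case: (parity i) => h [] -> hi.
  rewrite sA_even; case: h hi => [//|h] /= hi; rewrite -!addnn in hi *; lia.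
rewrite sA_odd /= -!addnn; rewrite -!addnn in hi; lia.
Qed.

Lemma inA_E n k b : inA n (nf (E PX k b)).
Proof.
case: b.
  right; right; exists (Word gx (nseq k gx)); right; exact: cong_refl.
case: k => [|k]; first by left; exact: cong_refl.
right; right; exists (Word gx (nseq k gx)); left.
rewrite /= cats0 -nseqSr; exact: cong_refl.
Qed.

Lemma inA_sA n i : inA n (nf (sA n i)).
Proof.
rewrite /sA; case: (i == 0); last exact: inA_E.
right; right; exists Zero; left; exact: cong_refl.
Qed.

Unset Implicit Arguments.
Theorem theorem4p10 (n : nat) (hn : 2 <= n) :
  S_finite n /\
  R_height_eq (leR_S n) (fun _ => True) n /\
  R_height_eq (leR_A n) (inA n) (2 * n - 1).
Proof.
split; [|split].
-
  pose dec (i : nat) : FS :=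
    nf (if i == 0 then Zr else
        let j := i.-1 in
        E (match j %% 3 with 0 => PX | 1 => PZ | _ => PYZ end) (j %/ 6) (odd (j %/ 3))).
  exists (6 * (n - 1)).+1, dec => u.
  have vu := V_valid hn u; have nu := @V_nOne n u.
  have e := nf_V hn u.
  move: vu nu e; case: (V n u) => [//|_ _ e|p k b vk _ e].
    by exists 0; split.
  rewrite /= in vk.
  pose cf q := match q with PX => 0 | PZ => 1 | PYZ => 2 end.
  have hc : cf p < 3 by case: p {e}.
  have hb : (b : nat) < 2 by case: b {e}.
  exists (6 * k + 3 * b + cf p).+1; split; first lia.
  rewrite /dec /=.
  have h1 : (6 * k + 3 * b + cf p) %% 3 = cf p.
    rewrite (_ : 6 * k + 3 * b + cf p = (2 * k + b) * 3 + cf p); last lia.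
    by rewrite modnMDl modn_small.
  have h2 : (6 * k + 3 * b + cf p) %/ 6 = k.
    rewrite (_ : 6 * k + 3 * b + cf p = k * 6 + (3 * b + cf p)); last lia.
    rewrite divnMDl // divn_small ?addn0 //; lia.
  have h3 : (6 * k + 3 * b + cf p) %/ 3 = 2 * k + b.
    rewrite (_ : 6 * k + 3 * b + cf p = (2 * k + b) * 3 + cf p); last lia.
    by rewrite divnMDl // divn_small ?addn0.
  rewrite h1 h2 h3 oddD oddM /= .
  by case: p e {h1 h2 h3 hc} => /=; case: b {hb}.
- split.
  + exists (fun i => nf (sS n i)); split => // i hi.
    have hi1 : i < n by lia.
    split.
      apply: (leS_of hn (w := X)); rewrite !VsS //.
      rewrite /sS /=; case: i hi hi1 => [|i] hi hi1 /=; case: ifP => h //.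
      1-3: first [by congr E; lia | by exfalso; lia | by exfalso; move/negbT: h; lia].
    move=> /(leS hn); rewrite !VsS // !rkS_sS //; lia.
  + move=> k f [_ hf].
    suff : k <= (n - 1).+1 by lia.
    apply: (@chain_bound (fun i => rkS n (V n (f i))) (n - 1) k).
      move=> i _ /=; case: (V n (f i)) => //= *; lia.
    move=> i hi; case: (hf i hi) => h1 h2.
    case: (leS hn h1) => // [[_ h3]]; by exfalso.
- split.
  + exists (fun i => nf (sA n i)); split => [i _|i hi]; first exact: inA_sA.
    have hi1 : i.+1 < (n - 1).*2.+1 by rewrite -!addnn; lia.
    have hi2 : i < (n - 1).*2.+1 by lia.
    split.
      right; case: (parity i) => h [] ei.
        exists (Word gz [:: gx]); split; first by right; right; exists Z; left; exact: cong_refl.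
        apply/(eqS_V hn); rewrite V_fmul !VsA // ei.
        rewrite -[h.*2.+1]/(h.*2.+1) sA_even sA_odd /=.
        rewrite ei -!addnn in hi1.
        case: h ei hi1 => [|h] ei hi1 /=; case: ifP => hh' //.
        - by exfalso; lia.
        - by congr E; lia.
        - by exfalso; move/negbT: hh'; lia.
      exists Y; split; first by right; left; exact: cong_refl.
      apply/(eqS_V hn); rewrite V_fmul !VsA // ei.
      rewrite (_ : h.*2.+2 = (h.+1).*2) ?sA_even ?sA_odd //=.
    move=> /(leA hn); rewrite !VsA // => [[e|]].
      have := congr1 (rkA n) e; rewrite !rkA_sA //; lia.
    rewrite !rkA_sA //; lia.
  + move=> k f [_ hf].
    have := (@chain_bound (fun i => rkA n (V n (f i))) (n - 1).*2 k).
    rewrite -!addnn; move=> H.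
    have : k <= (n - 1 + (n - 1)).+1; last lia.
    apply: H.
      move=> i _ /=; case: (V n (f i)) => //= *; rewrite -!addnn; lia.
    move=> i hi; case: (hf i hi) => h1 h2.
    case: (leA hn h1) => // e; exfalso; apply: h2.
    left; apply/(eqS_V hn); by rewrite e.
Qed.
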